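(* For every polynomial orbit-finite set $\Sigma$, the delay function $(\Sigma+\{\bot\})^*\supseteq\Sigma^*\ni a_1a_2\cdots a_k\mapsto \bot\,a_1\cdots a_{k-1}\in(\Sigma+\{\bot\})^*$ (for $k\ge1$; the empty word maps to itself) is a composition of primes.
   Context: Atoms $\mathbb A$ are a countably infinite set; polynomial orbit-finite sets are built from $\mathbb A$ and singletons by finite products and disjoint unions; equivariant means commuting with all bijections of $\mathbb A$. Compositions of primes: the smallest class containing (i) length-preserving homomorphisms lifting letterwise an equivariant function between polynomial orbit-finite sets, (ii) classical Mealy machine functions (finite alphabets and states, transition $Q\times\Sigma\to Q\times\Gamma$), (iii) atom propagation $(\mathbb A+\{\epsilon,\downarrow\})^*\to(\mathbb A+\bot)^*$ (position $i$ outputs the atom of position $j$ if $i$ is labelled $\downarrow$, $j<i$ carries an atom, and all positions strictly between are labelled $\epsilon$; otherwise $\bot$), closed under sequential composition and parallel composition $f_1|f_2:(\Sigma_1\times\Sigma_2)^*\to(\Gamma_1\times\Gamma_2)^*$ applying $f_i$ to the $i$-th projection. *)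

(* Defs.v *)
From mathcomp Require Import all_boot.
Set Implicit Arguments. Unset Strict Implicit. Unset Printing Implicit Defensive.

Definition atom := nat.

Inductive pof : Type :=
| PAtom : pof
| PUnit : pof
| PProd : pof -> pof -> pof
| PSum  : pof -> pof -> pof.

Fixpoint el (p : pof) : Type :=
  match p with
  | PAtom => atom
  | PUnit => unit
  | PProd a b => (el a * el b)%type
  | PSum a b => (el a + el b)%type
  end.

Fixpoint act (p : pof) (pi : atom -> atom) : el p -> el p :=
  match p return el p -> el p with
  | PAtom => fun x => pi x
  | PUnit => fun x => x
  | PProd a b => fun x => (act pi x.1, act pi x.2)
  | PSum a b => fun x => match x with
                         | inl y => inl (act pi y)
                         | inr z => inr (act pi z)
                         end
  end.

Definition equivariant (p q : pof) (f : el p -> el q) : Prop :=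
  forall pi : atom -> atom, bijective pi ->
    forall x : el p, f (act pi x) = act pi (f x).

(* Finite alphabets are the atom-free polynomial orbit-finite sets. *)
Fixpoint atom_free (p : pof) : bool :=
  match p with
  | PAtom => false
  | PUnit => true
  | PProd a b => atom_free a && atom_free b
  | PSum a b => atom_free a && atom_free b
  end.

Fixpoint mealy_run (Q A B : Type) (d : Q -> A -> Q * B) (q : Q) (w : seq A)
  : seq B :=
  match w with
  | [::] => [::]
  | a :: w' => (d q a).2 :: mealy_run d (d q a).1 w'
  end.

(* Atom propagation alphabets:
   input  A + {eps, down} encoded as PSum PAtom (PSum PUnit PUnit),
          inr (inl tt) = eps, inr (inr tt) = down;
   output A + {bot} encoded as PSum PAtom PUnit, inr tt = bot. *)
Definition prop_in : pof := PSum PAtom (PSum PUnit PUnit).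
Definition prop_out : pof := PSum PAtom PUnit.

Definition is_eps (x : el prop_in) : bool :=
  match x with inr (inl _) => true | _ => false end.
Definition is_down (x : el prop_in) : bool :=
  match x with inr (inr _) => true | _ => false end.

Fixpoint drop_eps (s : seq (el prop_in)) : seq (el prop_in) :=
  match s with
  | x :: s' => if is_eps x then drop_eps s' else s
  | [::] => [::]
  end.

(* Output at position i: if position i is "down", look at the nearest
   position j < i that is not labelled eps; if it carries an atom, output
   that atom (then all positions strictly between j and i are eps);
   otherwise output bot. *)
Definition atom_prop_at (w : seq (el prop_in)) (i : nat) : el prop_out :=
  if is_down (nth (inr (inl tt)) w i) then
    match drop_eps (rev (take i w)) with
    | inl a :: _ => inl a
    | _ => inr tt
    end
  else inr tt.

Definition atom_prop (w : seq (el prop_in)) : seq (el prop_out) :=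
  mkseq (atom_prop_at w) (size w).

Unset Implicit Arguments.
Inductive comp_primes : forall (S G : pof), (seq (el S) -> seq (el G)) -> Prop :=
| CP_hom (S G : pof) (f : el S -> el G) :
    equivariant f -> comp_primes S G (map f)
| CP_mealy (S G : pof) (Q : finType) (q0 : Q) (d : Q -> el S -> Q * el G) :
    atom_free S -> atom_free G -> comp_primes S G (mealy_run d q0)
| CP_prop : comp_primes prop_in prop_out atom_prop
| CP_seq (S M G : pof) (f : seq (el S) -> seq (el M)) (g : seq (el M) -> seq (el G)) :
    comp_primes S M f -> comp_primes M G g -> comp_primes S G (fun w => g (f w))
| CP_par (S1 S2 G1 G2 : pof)
    (f1 : seq (el S1) -> seq (el G1)) (f2 : seq (el S2) -> seq (el G2)) :
    comp_primes S1 G1 f1 -> comp_primes S2 G2 f2 ->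
    comp_primes (PProd S1 S2) (PProd G1 G2)
      (fun w => zip (f1 (unzip1 w)) (f2 (unzip2 w))).

Set Implicit Arguments.

Definition delay (S : pof) (w : seq (el S)) : seq (el (PSum S PUnit)) :=
  take (size w) ((inr tt : el (PSum S PUnit)) :: map (fun a => (inl a : el (PSum S PUnit))) w).

(* Main.v *)
From Stdlib Require Import FunctionalExtensionality.
Require Import Defs.
From mathcomp Require Import all_boot.


Set Implicit Arguments. Unset Strict Implicit. Unset Printing Implicit Defensive.

Lemma cp_ext (S G : pof) (f g : seq (el S) -> seq (el G)) :
  comp_primes S G f -> (forall w, f w = g w) -> comp_primes S G g.
Proof. move=> H E; have -> : g = f by apply: functional_extensionality => w; rewrite E. exact H. Qed.

Definition bot {S : pof} : el (PSum S PUnit) := inr tt.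

Definition dly1 (S : pof) (w : seq (el (PSum S PUnit))) : seq (el (PSum S PUnit)) :=
  take (size w) (bot :: w).

Lemma dly1_map (A B : pof) (g : el (PSum A PUnit) -> el (PSum B PUnit)) w :
  g bot = bot -> dly1 (map g w) = map g (dly1 w).
Proof. by move=> H; rewrite /dly1 size_map map_take /= H. Qed.

Lemma zip_map2 (T U V : Type) (f : T -> U) (g : T -> V) (s : seq T) :
  zip (map f s) (map g s) = map (fun x => (f x, g x)) s.
Proof. by elim: s => //= x s ->. Qed.

Lemma unzip1_map (T U V : Type) (f : T -> U * V) s : unzip1 (map f s) = map (fun x => (f x).1) s.
Proof. by rewrite /unzip1 -map_comp. Qed.
Lemma unzip2_map (T U V : Type) (f : T -> U * V) s : unzip2 (map f s) = map (fun x => (f x).2) s.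
Proof. by rewrite /unzip2 -map_comp. Qed.

Definition dU (q : bool) (x : el (PSum PUnit PUnit)) : bool * el (PSum PUnit PUnit) :=
  (if x is inl _ then true else false, if q then inl tt else inr tt).

Lemma mealy_dU q w : mealy_run dU q w = take (size w) ((if q then inl tt else inr tt) :: w).
Proof.
elim: w q => [|x w IH] q //=.
rewrite IH; case: q; case: x => [[]|[]] //.
Qed.

Lemma Q_unit : comp_primes (PSum PUnit PUnit) (PSum PUnit PUnit) (@dly1 PUnit).
Proof.
apply: cp_ext (CP_mealy _ _ _ false dU _ _) _ => // w.
by rewrite mealy_dU.
Qed.

Section ProdSum.
Variables A B : pof.

Definition splitP (x : el (PSum (PProd A B) PUnit)) : el (PProd (PSum A PUnit) (PSum B PUnit)) :=
  match x with inl (a, b) => (inl a, inl b) | inr _ => (inr tt, inr tt) end.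
Definition combP (y : el (PProd (PSum A PUnit) (PSum B PUnit))) : el (PSum (PProd A B) PUnit) :=
  match y with (inl a, inl b) => inl (a, b) | _ => inr tt end.

Lemma splitP_eq : equivariant splitP.
Proof. by move=> pi _ [[a b]|[]]. Qed.
Lemma combP_eq : equivariant combP.
Proof. by move=> pi _ [[a|[]] [b|[]]]. Qed.

Lemma Q_prod : comp_primes _ _ (@dly1 A) -> comp_primes _ _ (@dly1 B) ->
  comp_primes _ _ (@dly1 (PProd A B)).
Proof.
move=> HA HB.
apply: cp_ext (CP_seq _ _ _ _ _ (CP_hom _ _ _ splitP_eq)
   (CP_seq _ _ _ _ _ (CP_par _ _ _ _ _ _ HA HB) (CP_hom _ _ _ combP_eq))) _ => w /=.
rewrite unzip1_map unzip2_map.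
rewrite (dly1_map (g := fun x => (splitP x).1)) // (dly1_map (g := fun x => (splitP x).2)) //.
rewrite zip_map2 -map_comp -[RHS]map_id; apply: eq_map => -[[a b]|[]] //.
Qed.

Definition splitS (x : el (PSum (PSum A B) PUnit)) : el (PProd (PSum A PUnit) (PSum B PUnit)) :=
  match x with inl (inl a) => (inl a, inr tt) | inl (inr b) => (inr tt, inl b)
  | inr _ => (inr tt, inr tt) end.
Definition combS (y : el (PProd (PSum A PUnit) (PSum B PUnit))) : el (PSum (PSum A B) PUnit) :=
  match y with (inl a, _) => inl (inl a) | (_, inl b) => inl (inr b) | _ => inr tt end.

Lemma splitS_eq : equivariant splitS.
Proof. by move=> pi _ [[a|b]|[]]. Qed.
Lemma combS_eq : equivariant combS.
Proof. by move=> pi _ [[a|[]] [b|[]]]. Qed.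

Lemma Q_sum : comp_primes _ _ (@dly1 A) -> comp_primes _ _ (@dly1 B) ->
  comp_primes _ _ (@dly1 (PSum A B)).
Proof.
move=> HA HB.
apply: cp_ext (CP_seq _ _ _ _ _ (CP_hom _ _ _ splitS_eq)
   (CP_seq _ _ _ _ _ (CP_par _ _ _ _ _ _ HA HB) (CP_hom _ _ _ combS_eq))) _ => w /=.
rewrite unzip1_map unzip2_map.
rewrite (dly1_map (g := fun x => (splitS x).1)) // (dly1_map (g := fun x => (splitS x).2)) //.
rewrite zip_map2 -map_comp -[RHS]map_id; apply: eq_map => -[[a|b]|[]] //.
Qed.
End ProdSum.

Definition epsI : el prop_in := inr (inl tt).
Definition downI : el prop_in := inr (inr tt).

Lemma ap_noeps (s : seq (el prop_in)) i : i < size s -> all (fun x => ~~ is_eps x) s ->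
  atom_prop_at s i = if is_down (nth epsI s i) then
     (if i is j.+1 then (if nth epsI s j is inl a then inl a else inr tt) else inr tt)
     else inr tt.
Proof.
move=> Hi Hall; rewrite /atom_prop_at.
case: (is_down _) => //; case: i Hi => [|j] Hj; first by rewrite take0.
rewrite (take_nth epsI) ?(ltnW Hj) // rev_rcons /=.
have : ~~ is_eps (nth epsI s j) by apply: (allP Hall); apply: mem_nth; apply: ltnW.
by case: (nth epsI s j) => [a|[[]|[]]].
Qed.

Lemma size_mealy (Q A B : Type) (d : Q -> A -> Q * B) q s : size (mealy_run d q s) = size s.
Proof. by elim: s q => //= x s IH q; rewrite IH. Qed.

Definition dP (q : bool) (x : el PUnit) : bool * el (PSum PUnit PUnit) :=
  (~~ q, if q then inr tt else inl tt).

Lemma mealy_dP q s i : i < size s ->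
  nth (inl tt) (mealy_run dP q s) i = if q (+) odd i then inr tt else inl tt.
Proof.
elim: s q i => [|x s IH] q [|i] //= Hi; first by case: q.
rewrite IH //; by case: q; case: (odd i).
Qed.

Definition tag (x : el (PSum PAtom PUnit)) : el (PProd PUnit (PSum PAtom PUnit)) := (tt, x).
Lemma tag_eq : equivariant tag. Proof. by []. Qed.
Lemma id_eq (S : pof) : equivariant (fun x : el S => x). Proof. by []. Qed.

Definition h3 (y : el (PProd (PSum PUnit PUnit) (PSum PAtom PUnit))) : el (PProd prop_in prop_in) :=
  let e : el prop_in := match y.2 with inl a => inl a | inr _ => downI end in
  match y.1 with inl _ => (e, downI) | inr _ => (downI, e) end.
Lemma h3_eq : equivariant h3.
Proof. by move=> pi _ [[[]|[]] [a|[]]]. Qed.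

Definition comb5 (o : el (PProd prop_out prop_out)) : el (PSum PAtom PUnit) :=
  match o.1 with inl a => inl a | _ => o.2 end.
Lemma comb5_eq : equivariant comb5.
Proof. by move=> pi _ [[a|[]] [b|[]]]. Qed.

Lemma Q_atom : comp_primes _ _ (@dly1 PAtom).
Proof.
have M := CP_mealy PUnit (PSum PUnit PUnit) bool false dP erefl erefl.
have P1 := CP_par _ _ _ _ _ _ M (CP_hom _ _ _ (@id_eq (PSum PAtom PUnit))).
have P2 := CP_par _ _ _ _ _ _ CP_prop CP_prop.
have C := CP_seq _ _ _ _ _ (CP_hom _ _ _ tag_eq)
  (CP_seq _ _ _ _ _ P1 (CP_seq _ _ _ _ _ (CP_hom _ _ _ h3_eq)
  (CP_seq _ _ _ _ _ P2 (CP_hom _ _ _ comb5_eq)))).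
apply: (cp_ext C) => w /=.
set V := map h3 _.
have sV : size V = size w.
  by rewrite /V size_map size_zip size_mealy !size_map minnn.
have HV : forall k, k < size w ->
    nth (downI, downI) V k = h3 (if odd k then inr tt else inl tt, nth (inr tt) w k).
  move=> k Hk; rewrite /V (nth_map (inl tt, inr tt)); last by rewrite size_zip size_mealy !size_map minnn.
  rewrite nth_zip; last by rewrite size_mealy !size_map.
  rewrite mealy_dP ?size_map //=.
  by rewrite map_id unzip2_map (nth_map (inr tt)).
have A1 : all (fun x => ~~ is_eps x) (unzip1 V).
  by rewrite /V (unzip1_map h3) all_map; apply/allP => -[p x] _; case: p => [[]|[]]; case: x => [a|[]].
have A2 : all (fun x => ~~ is_eps x) (unzip2 V).
  by rewrite /V (unzip2_map h3) all_map; apply/allP => -[p x] _; case: p => [[]|[]]; case: x => [a|[]].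
clearbody V; clear C P1 P2 M.
have sw : size (dly1 w) = size w by rewrite /dly1 size_takel //= leqnSn.
apply: (@eq_from_nth _ (inr tt)).
  by rewrite size_map size_zip /atom_prop !size_mkseq /unzip1 /unzip2 !size_map sV minnn sw.
rewrite size_map size_zip /atom_prop !size_mkseq /unzip1 /unzip2 !size_map sV minnn => i Hi.
rewrite (nth_map (inr tt, inr tt)); last by rewrite size_zip !size_mkseq minnn.
rewrite nth_zip; last by rewrite !size_mkseq.
rewrite !nth_mkseq ?size_map ?sV //.
rewrite !ap_noeps ?size_map ?sV //.
rewrite /dly1 nth_take //.
case: i Hi => [|j] Hi.
  rewrite !(nth_map (downI, downI)) ?sV // HV //=.
  by case: (nth (inr tt) w 0) => [a|[]].
rewrite !(nth_map (downI, downI)) ?sV ?(ltnW Hi) // !HV ?(ltnW Hi) //=.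
by case: (odd j); case: (nth _ w j) => [a|[]]; case: (nth _ w j.+1) => [b|[]].
Qed.

Lemma Q_all (S : pof) : comp_primes _ _ (@dly1 S).
Proof.
elim: S => [||A HA B HB|A HA B HB].
- exact: Q_atom.
- exact: Q_unit.
- exact: Q_prod.
- exact: Q_sum.
Qed.

Definition inlS (S : pof) (x : el S) : el (PSum S PUnit) := inl x.
Lemma inlS_eq (S : pof) : equivariant (@inlS S). Proof. by []. Qed.

Theorem mainTheorem13 (S : pof) : comp_primes S (PSum S PUnit) (@delay S).
Proof.
apply: (cp_ext (CP_seq _ _ _ _ _ (CP_hom _ _ _ (@inlS_eq S)) (Q_all S))) => w.
by rewrite /dly1 /delay size_map.
Qed.
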